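(* Let $A,B\in\mathbb R^{\mathcal N\times\mathcal N}$ with $A$ invertible, and assume that among the generalized eigenvalues $\lambda\in\mathbb C$ of $Av=\lambda Bv$ there is a unique positive one $\lambda>0$ of smallest modulus, and that it is simple. Let $u,u^*$, $k$, $M$, $\tilde u^*$, $P$, $P^*$ be as in the context. Let $u_N,u_N^*\in\mathbb R^{\mathcal N}$ with $\langle u_N^*,Au_N\rangle\neq0$, and let $k_N:=\frac{\langle u_N^*,Bu_N\rangle}{\langle u_N^*,Au_N\rangle}$ satisfy $k_N\notin\sigma\big((PMP)|_{[\operatorname{Span}\{\tilde u^*\}]^\perp}\big)$ and $k_N\notin\sigma\big((P^*M^TP^* )|_{[\operatorname{Span}\{u\}]^\perp}\big)$. Let $R_N=(B-k_NA)u_N$, $R_N^*=(B^T-k_NA^T)u_N^*$. Then $$|k_N-k|\le C_N^k\,\eta_N^k,\qquad \eta_N^k:=\frac{\|R_N\|\,\|R_N^*\|}{|\langle u_N^*,Au_N\rangle|},$$ where $$C_N^k:=\Big\|\big[P^*(P^*M^TP^*-k_NI)^+P^*\big]^T(M-kI)P(PMP-k_NI)^+PA^{-1}\Big\|.$$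
   Context: $\mathbb R^{\mathcal N}$ carries the Euclidean inner product $\langle\cdot,\cdot\rangle$ and norm $\|\cdot\|$; on matrices $\|\cdot\|$ is the induced operator norm. ''Simple'' means $k=1/\lambda$ is an algebraically simple eigenvalue of $M=A^{-1}B$. $u,u^*$ are unit vectors with $Au=\lambda Bu$, $A^Tu^*=\lambda B^Tu^*$; $\tilde u^*=A^Tu^*/\|A^Tu^*\|$; $P=I-\frac{u(\tilde u^* )^T}{\langle u,\tilde u^*\rangle}$, $P^*=I-\frac{\tilde u^*u^T}{\langle u,\tilde u^*\rangle}$ (here $\langle u,\tilde u^*\rangle\ne0$). The operator $(PMP-k_NI)^+$ is the linear map equal to the inverse of $(PMP-k_NI)|_{[\operatorname{Span}\{\tilde u^*\}]^\perp}$ (an invertible map of $[\operatorname{Span}\{\tilde u^*\}]^\perp$ onto itself) on $[\operatorname{Span}\{\tilde u^*\}]^\perp$ and equal to $0$ on $\operatorname{Span}\{u\}$; likewise $(P^*M^TP^*-k_NI)^+$ equals the inverse of $(P^*M^TP^*-k_NI)|_{[\operatorname{Span}\{u\}]^\perp}$ on $[\operatorname{Span}\{u\}]^\perp$ and $0$ on $\operatorname{Span}\{\tilde u^*\}$. *)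

(* Defs.v *)
From HB Require Import structures.
From mathcomp Require Import all_boot all_order all_algebra.
From mathcomp Require Import classical_sets reals.
From mathcomp Require Import complex.
Set Implicit Arguments. Unset Strict Implicit. Unset Printing Implicit Defensive.
Import Order.TTheory GRing.Theory Num.Theory.
Local Open Scope ring_scope.

Definition dotv {R : realType} {n : nat} (x y : 'cV[R]_n) : R := (x^T *m y) 0 0.

Definition vnorm {R : realType} {n : nat} (x : 'cV[R]_n) : R := Num.sqrt (dotv x x).

Definition opnorm {R : realType} {n : nat} (X : 'M[R]_n) : R :=
  sup [set vnorm (X *m x) | x in [set x : 'cV[R]_n | vnorm x = 1]]%classic.

Definition gen_eigenvalue {R : realType} {n : nat} (A B : 'M[R]_n) (mu : R[i]) : Prop :=
  exists v : 'cV[R[i]]_n, v != 0 /\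
    map_mx (real_complex R) A *m v = mu *: (map_mx (real_complex R) B *m v).

(* c is in the spectrum of the restriction of X to [Span{w}]^perp
   (X is assumed to map this subspace into itself). *)
Definition in_restr_spectrum {R : realType} {n : nat} (X : 'M[R]_n) (w : 'cV[R]_n) (c : R) : Prop :=
  exists v : 'cV[R]_n, v != 0 /\ dotv w v = 0 /\ X *m v = c *: v.

(* Q is the operator "(X)^+" relative to the decomposition Span{z} (+) [Span{w}]^perp:
   on [Span{w}]^perp it is the inverse of X restricted to [Span{w}]^perp
   (an invertible map of that subspace onto itself), and it vanishes on Span{z}. *)
Definition is_restr_pinv {R : realType} {n : nat} (X : 'M[R]_n) (w z : 'cV[R]_n) (Q : 'M[R]_n) : Prop :=
  Q *m z = 0 /\
  forall v : 'cV[R]_n, dotv w v = 0 ->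
    [/\ dotv w (X *m v) = 0, dotv w (Q *m v) = 0,
        X *m (Q *m v) = v & Q *m (X *m v) = v].

Definition projP {R : realType} {n : nat} (u w : 'cV[R]_n) : 'M[R]_n :=
  1%:M - (dotv u w)^-1 *: (u *m w^T).

(* Main.v *)
Require Import Defs.
From HB Require Import structures.
From mathcomp Require Import all_boot all_order all_algebra.
From mathcomp Require Import classical_sets reals.
From mathcomp Require Import complex.
From mathcomp Require Import ring lra.
Import Order.TTheory GRing.Theory Num.Theory.
Local Open Scope ring_scope.
Set Implicit Arguments. Unset Strict Implicit.
Section H.
Variables (R : realType) (n : nat).
Implicit Types (x y z : 'cV[R]_n) (X Y : 'M[R]_n).

Lemma dotvE x y : dotv x y = \sum_i x i 0 * y i 0.
Proof. by rewrite /dotv mxE; apply: eq_bigr => i _; rewrite mxE. Qed.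

Lemma dotvC x y : dotv x y = dotv y x.
Proof. by rewrite !dotvE; apply: eq_bigr => i _; rewrite mulrC. Qed.

Lemma dotv_mul x Y y : dotv x (Y *m y) = dotv (Y^T *m x) y.
Proof. by rewrite /dotv trmx_mul trmxK mulmxA. Qed.

Lemma dotv_mx x y : x^T *m y = (dotv x y)%:M.
Proof. by apply/matrixP => i j; rewrite !ord1 [RHS]mxE /dotv mulr1n. Qed.

Lemma dotvDr x y z : dotv x (y + z) = dotv x y + dotv x z.
Proof. by rewrite /dotv mulmxDr mxE. Qed.
Lemma dotvZr x c y : dotv x (c *: y) = c * dotv x y.
Proof. by rewrite /dotv -scalemxAr mxE. Qed.
Lemma dotvBr x y z : dotv x (y - z) = dotv x y - dotv x z.
Proof. by rewrite dotvDr -scaleN1r dotvZr mulN1r. Qed.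

Lemma dotv_ge0 x : 0 <= dotv x x.
Proof. by rewrite dotvE; apply: sumr_ge0 => i _; rewrite -expr2 sqr_ge0. Qed.

Lemma dotv_quad a b x y : dotv (a *: x + b *: y) (a *: x + b *: y) =
  a^+2 * dotv x x + 2 * a * b * dotv x y + b^+2 * dotv y y.
Proof.
rewrite dotvDr ![dotv (_ + _) _]dotvC !dotvDr !dotvZr ![dotv (_ *: _) _]dotvC !dotvZr.
rewrite (dotvC y x); ring.
Qed.

Lemma CS2 x y : dotv x y ^+ 2 <= dotv x x * dotv y y.
Proof.
set xx := dotv x x; set yy := dotv y y; set xy := dotv x y.
have hx : 0 <= xx := dotv_ge0 x. have hy : 0 <= yy := dotv_ge0 y.
have h1 := dotv_ge0 (yy *: x + (- xy) *: y).
rewrite dotv_quad -/xx -/yy -/xy in h1.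
have h2 := dotv_ge0 (xx *: y + (- xy) *: x).
rewrite dotv_quad -/xx -/yy (dotvC y x) -/xy in h2.
have h3 := dotv_ge0 (1 *: x + (- 1) *: y).
rewrite dotv_quad -/xx -/yy -/xy in h3.
have h4 := dotv_ge0 (1 *: x + 1 *: y).
rewrite dotv_quad -/xx -/yy -/xy in h4.
have [yp|] := ltrP 0 yy.
  have : 0 <= yy * (xx * yy - xy ^+ 2) by nra.
  by rewrite pmulr_rge0 // subr_ge0.
move=> y0; have {y0} y0 : yy = 0 by apply/le_anti; rewrite y0 hy.
have [xp|] := ltrP 0 xx.
  have : 0 <= xx * (xx * yy - xy ^+ 2) by nra.
  by rewrite pmulr_rge0 // subr_ge0.
move=> x0; have {x0} x0 : xx = 0 by apply/le_anti; rewrite x0 hx.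
rewrite x0 y0 in h3 h4 *. nra.
Qed.

Lemma CS x y : `|dotv x y| <= vnorm x * vnorm y.
Proof.
rewrite /vnorm -sqrtrM ?dotv_ge0 // -sqrtr_sqr.
by rewrite ler_psqrt ?CS2 // ?nnegrE ?sqr_ge0 // mulr_ge0 ?dotv_ge0.
Qed.


Lemma vnormZ c x : vnorm (c *: x) = `|c| * vnorm x.
Proof.
rewrite /vnorm dotvZr dotvC dotvZr mulrA -expr2 sqrtrM ?sqr_ge0 //.
by rewrite sqrtr_sqr.
Qed.

Lemma vnorm_ge0 x : 0 <= vnorm x.
Proof. exact: sqrtr_ge0. Qed.

Lemma mulmx_dot X x i : (X *m x) i 0 = dotv (row i X)^T x.
Proof. by rewrite dotvE mxE; apply: eq_bigr => j _; rewrite !mxE. Qed.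

Lemma row_bound X x :
  dotv (X *m x) (X *m x) <= (\sum_i dotv (row i X)^T (row i X)^T) * dotv x x.
Proof.
rewrite [X in X <= _]dotvE mulr_suml; apply: ler_sum => i _.
by rewrite mulmx_dot -expr2 CS2.
Qed.

Lemma opnorm_hasub X :
  has_ubound [set vnorm (X *m x) | x in [set x : 'cV[R]_n | vnorm x = 1]]%classic.
Proof.
exists (Num.sqrt (\sum_i dotv (row i X)^T (row i X)^T)).
move=> _ [x /= hx <-].
have xx1 : dotv x x = 1.
  by rewrite -(sqr_sqrtr (dotv_ge0 x)) -/(vnorm x) hx expr1n.
rewrite /vnorm; apply: ler_wsqrtr.
by have := row_bound X x; rewrite xx1 mulr1.
Qed.

Lemma opnorm_ub X x : vnorm (X *m x) <= opnorm X * vnorm x.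
Proof.
have [xp|] := ltrP 0 (dotv x x); last first.
  move=> x0.
  have -> : vnorm x = 0 by rewrite /vnorm; apply/eqP; rewrite sqrtr_eq0.
  have -> : vnorm (X *m x) = 0.
    rewrite /vnorm; apply/eqP; rewrite sqrtr_eq0.
    apply: (le_trans (row_bound X x)).
    by rewrite mulr_ge0_le0 // sumr_ge0 // => i _; apply: dotv_ge0.
  by rewrite mulr0.
set s := vnorm x.
have sp : 0 < s by rewrite /s /vnorm sqrtr_gt0.
have he : vnorm (s^-1 *: x) = 1.
  by rewrite vnormZ gtr0_norm ?invr_gt0 // mulVf // gt_eqF.
have := ub_le_sup (opnorm_hasub X) (ex_intro2 _ _ (s^-1 *: x) he erefl).
rewrite -scalemxAr vnormZ gtr0_norm ?invr_gt0 // -/(opnorm X).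
by rewrite ler_pdivrMl // mulrC.
Qed.


Lemma side (P M Q : 'M[R]_n) (w z v : 'cV[R]_n) kN :
  P *m P = P -> P *m M = M *m P -> w^T *m P = 0 ->
  is_restr_pinv (P *m M *m P - kN%:M) w z Q ->
  Q *m (P *m ((M - kN%:M) *m v)) = P *m v.
Proof.
move=> PP PM wP [_ hQ].
have hp : dotv w (P *m v) = 0 by rewrite /dotv mulmxA wP mul0mx mxE.
have [_ _ _ <-] := hQ _ hp; congr (Q *m _).
rewrite !mulmxBl !mulmxBr !mul_scalar_mx scalemxAr; congr (_ - _).
by rewrite !mulmxA -(mulmxA _ P P) PP -(mulmxA P M P) -PM mulmxA PP.
Qed.

Lemma projP_facts (u w : 'cV[R]_n) (M : 'M[R]_n) k :
  dotv u w != 0 -> M *m u = k *: u -> w^T *m M = k *: w^T ->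
  [/\ projP u w *m u = 0, w^T *m projP u w = 0, projP u w *m projP u w = projP u w
    & projP u w *m M = M *m projP u w].
Proof.
move=> d0 Mu wM; rewrite /projP.
have Pu : (1%:M - (dotv u w)^-1 *: (u *m w^T)) *m u = 0.
  rewrite mulmxBl mul1mx -scalemxAl -mulmxA dotv_mx mul_mx_scalar scalerA.
  by rewrite (dotvC w u) mulVf // scale1r subrr.
split => //.
- rewrite mulmxBr mulmx1 -scalemxAr mulmxA dotv_mx mul_scalar_mx scalerA.
  by rewrite (dotvC w u) mulVf // scale1r subrr.
- by rewrite [in LHS]mulmxBr mulmx1 -scalemxAr mulmxA Pu mul0mx scaler0 subr0.
- rewrite mulmxBl mulmxBr mul1mx mulmx1 -scalemxAl -scalemxAr -mulmxA wM.
  by rewrite mulmxA Mu -scalemxAr -scalemxAl.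
Qed.

End H.
Unset Implicit Arguments. Set Strict Implicit.
Theorem proposition2 (R : realType) (n : nat) (A B : 'M[R]_n) (lambda : R)
  (u us : 'cV[R]_n) (Q Qs : 'M[R]_n) (uN usN : 'cV[R]_n) :
  A \in unitmx ->
  (* lambda > 0 is a generalized eigenvalue, the unique one of smallest modulus *)
  0 < lambda ->
  gen_eigenvalue A B (real_complex R lambda) ->
  (forall mu : R[i], gen_eigenvalue A B mu -> mu != real_complex R lambda -> real_complex R lambda < `|mu|) ->
  (* k = 1/lambda is an algebraically simple eigenvalue of M = A^-1 B *)
  mup (lambda^-1) (char_poly (invmx A *m B)) = 1%N ->
  (* unit eigenvectors *)
  vnorm u = 1 -> A *m u = lambda *: (B *m u) ->
  vnorm us = 1 -> A^T *m us = lambda *: (B^T *m us) ->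
  let k := lambda^-1 in
  let M := invmx A *m B in
  let ust := (vnorm (A^T *m us))^-1 *: (A^T *m us) in
  let P := projP u ust in
  let Ps := projP ust u in
  dotv usN (A *m uN) != 0 ->
  let kN := dotv usN (B *m uN) / dotv usN (A *m uN) in
  ~ in_restr_spectrum (P *m M *m P) ust kN ->
  ~ in_restr_spectrum (Ps *m M^T *m Ps) u kN ->
  (* Q = (PMP - kN I)^+ , Qs = (P* M^T P* - kN I)^+ *)
  is_restr_pinv (P *m M *m P - kN%:M) ust u Q ->
  is_restr_pinv (Ps *m M^T *m Ps - kN%:M) u ust Qs ->
  let RN := (B - kN *: A) *m uN in
  let RsN := (B^T - kN *: A^T) *m usN in
  let eta := vnorm RN * vnorm RsN / `|dotv usN (A *m uN)| in
  let C := opnorm ((Ps *m Qs *m Ps)^T *m (M - k%:M) *m P *m Q *m P *m invmx A) in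
  `|kN - k| <= C * eta.
Proof.
move=> hA hl _ _ _ hu hAu hus hAus k M ust P Ps ha kN _ _ hQ hQs.
cbv zeta.
set RN := (B - kN *: A) *m uN; set RsN := (B^T - kN *: A^T) *m usN.
set X := (_ *m invmx A); set C := opnorm X.
set a := dotv usN (A *m uN) in ha *.
have kE : k = lambda^-1 := erefl. have ME : M = invmx A *m B := erefl.
have ustE : ust = (vnorm (A^T *m us))^-1 *: (A^T *m us) := erefl.
have PE : P = projP u ust := erefl. have PsE : Ps = projP ust u := erefl.
have kNE : kN = dotv usN (B *m uN) / a := erefl.
have CE : C = opnorm X := erefl.
have XE : X = (Ps *m Qs *m Ps)^T *m (M - k%:M) *m P *m Q *m P *m invmx A := erefl.
have RNE : RN = (B - kN *: A) *m uN := erefl.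
have RsNE : RsN = (B^T - kN *: A^T) *m usN := erefl.
clearbody C X RN RsN kN P Ps ust M k.
have kl : k * lambda = 1 by rewrite kE mulVf // gt_eqF.
have Mu : M *m u = k *: u.
  by rewrite ME -mulmxA -[B *m u]scale1r -kl -scalerA -hAu -scalemxAr mulKmx.
have usB : us^T *m B = k *: (us^T *m A).
  have := congr1 trmx hAus; rewrite trmx_mul trmxK linearZ /= trmx_mul trmxK => ->.
  by rewrite scalerA kl scale1r.
have uM : ust^T *m M = k *: ust^T.
  rewrite ustE linearZ /= trmx_mul trmxK -scalemxAl ME mulmxA -(mulmxA _ A).
  by rewrite mulmxV // mulmx1 usB scalerA mulrC -scalerA.
have MTust : M^T *m ust = k *: ust.
  by apply: trmx_inj; rewrite trmx_mul trmxK uM linearZ.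
have uMT : u^T *m M^T = k *: u^T.
  by have := congr1 trmx Mu; rewrite trmx_mul linearZ.
have d0 : dotv u ust != 0.
  apply/negP => /eqP d0.
  have P1 : P = 1%:M by rewrite PE /projP d0 invr0 scale0r subr0.
  case: hQ => Qu hQ.
  have hp : dotv ust u = 0 by rewrite dotvC.
  have [_ _ _] := hQ _ hp.
  rewrite P1 mulmx1 mul1mx mulmxBl Mu mul_scalar_mx -scalerBl -scalemxAr Qu scaler0.
  move=> u0; move: hu; rewrite -u0 -(scale0r (0 : 'cV[R]_n)) vnormZ normr0 mul0r.
  by move/eqP; rewrite eq_sym oner_eq0.
have [Pu wP PP PM] := projP_facts d0 Mu uM.
have d0' : dotv ust u != 0 by rewrite dotvC.
have [Psu uPs PsPs PsM] := projP_facts d0' MTust uMT.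
rewrite -PE in Pu wP PP PM; rewrite -PsE in Psu uPs PsPs PsM.
have PsT : Ps^T = P.
  rewrite PsE PE /projP linearB /= trmx1 linearZ /= trmx_mul trmxK.
  by rewrite dotvC.
have hx : invmx A *m RN = (M - kN%:M) *m uN.
  by rewrite RNE mulmxA mulmxBr -scalemxAr mulVmx // ME scalemx1.
have hw : RsN = (M^T - kN%:M) *m (A^T *m usN).
  by rewrite RsNE mulmxA !mulmxBl mul_scalar_mx ME trmx_mul -(mulmxA B^T) -trmx_mul mulmxV // trmx1 mulmx1.
have Mku : (M - k%:M) *m u = 0 by rewrite mulmxBl Mu mul_scalar_mx subrr.
have hMk : (M - k%:M) *m P = M - k%:M.
  by rewrite PE /projP mulmxBr mulmx1 -scalemxAr mulmxA Mku mul0mx scaler0 subr0.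
have hPMk : P *m (M - k%:M) = (M - k%:M) *m P.
  by rewrite mulmxBr mulmxBl PM mul_mx_scalar mul_scalar_mx.
have PPu : P *m (P *m uN) = P *m uN by rewrite mulmxA PP.
have PsPsw : Ps *m (Ps *m (A^T *m usN)) = Ps *m (A^T *m usN) by rewrite mulmxA PsPs.
have key : dotv RsN (X *m RN) = a * (kN - k).
  rewrite XE -!mulmxA hx (side _ PP PM wP hQ) PPu dotv_mul trmxK -!mulmxA hw.
  rewrite (side _ PsPs PsM uPs hQs) PsPsw dotvC dotv_mul PsT dotvC.
  rewrite mulmxA hPMk -mulmxA PPu mulmxA hMk -dotv_mul mulmxBl mulmxBr dotvBr mul_scalar_mx.
  rewrite -scalemxAr dotvZr ME -(mulmxA (invmx A)) mulKVmx // -/a kNE.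
  by field.
have hab : `|kN - k| = `|dotv RsN (X *m RN)| / `|a|.
  by rewrite key normrM mulrC mulKf // normr_eq0.
rewrite hab ler_pdivrMr ?normr_gt0 //.
have -> : C * (vnorm RN * vnorm RsN / `|a|) * `|a| = vnorm RsN * (C * vnorm RN).
  by field; rewrite normr_eq0.
apply: (le_trans (CS RsN (X *m RN))).
by rewrite ler_wpM2l ?vnorm_ge0 // CE opnorm_ub.
Qed.
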